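(* Let $d\ge2$ and let $f:\{0,1\}^r\to\{0,1\}$ satisfy $f(0,\dots,0)=1$. If $f$ contains $\mathrm{NAND}_d$ as a restriction and does not contain $\mathrm{IMPL}$ as a $0$-restriction, then $f$ contains $\mathrm{NAND}_d$ as a $0$-restriction.
   Context: $g:\{0,1\}^s\to\{0,1\}$ is a restriction of $f$ if there are pairwise disjoint, possibly empty, sets $X_1,\dots,X_s,Z_0,Z_1$ with union $[r]$ such that $g(x_1,\dots,x_s)=f(u)$. Here $u_i=x_j$ for $i\in X_j$, $u_i=0$ for $i\in Z_0$, and $u_i=1$ for $i\in Z_1$. It is a $0$-restriction if this holds with $Z_1=\emptyset$. $\mathrm{IMPL}(y_1,y_2)=\overline{y_1}\vee y_2$, and $\mathrm{NAND}_d(y_1,\dots,y_d)=\overline{y_1\wedge\cdots\wedge y_d}$. *)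

(* Defs.v *)
From mathcomp Require Import all_boot.
Set Implicit Arguments. Unset Strict Implicit. Unset Printing Implicit Defensive.

Definition boolfun (r : nat) := ('I_r -> bool) -> bool.

(* A partition of [r] into pairwise disjoint (possibly empty) sets
   X_1..X_s, Z_0, Z_1 is encoded by a map sigma : 'I_r -> 'I_s + bool:
   sigma i = inl j  means i \in X_j,  sigma i = inr b  means i \in Z_b. *)
Definition subst_input (r s : nat) (sigma : 'I_r -> 'I_s + bool)
  (x : 'I_s -> bool) : 'I_r -> bool :=
  fun i => match sigma i with inl j => x j | inr b => b end.

Definition is_restriction (r s : nat) (f : boolfun r) (g : boolfun s) : Prop :=
  exists sigma : 'I_r -> 'I_s + bool,
    forall x : 'I_s -> bool, g x = f (subst_input sigma x).

(* g is a 0-restriction of f : same, with Z_1 empty *)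
Definition is_0restriction (r s : nat) (f : boolfun r) (g : boolfun s) : Prop :=
  exists sigma : 'I_r -> 'I_s + bool,
    (forall i, sigma i <> inr true) /\
    forall x : 'I_s -> bool, g x = f (subst_input sigma x).

Definition IMPL : boolfun 2 := fun y => ~~ y ord0 || y (@Ordinal 2 1 isT).

Definition NAND (d : nat) : boolfun d := fun y => ~~ [forall i, y i].
Arguments NAND d y : clear implicits.

(* Main.v *)
Require Import Defs.
From mathcomp Require Import all_boot.
From Stdlib Require Import Classical FunctionalExtensionality.

Theorem mainTheorem16 (r d : nat) (f : boolfun r) :
  2 <= d ->
  f (fun _ => false) = true ->
  is_restriction f (NAND d) ->
  ~ is_0restriction f IMPL ->
  is_0restriction f (NAND d).
Proof.
move=> Hd Hf0 [sigma Hs] HnI.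
pose sigma0 := fun i => match sigma i with inl j => @inl 'I_d bool j | inr _ => inr false end.
have H00 : subst_input sigma0 (fun _ => false) = (fun _ => false).
  by apply: functional_extensionality => i; rewrite /subst_input /sigma0; case: (sigma i).
have [[x [Hx1 Hx2]] | HnB] := classic (exists x : 'I_d -> bool, (exists i, x i = false) /\ f (subst_input sigma0 x) = false).
  exfalso; apply: HnI.
  exists (fun i => match sigma i with
                   | inl j => if x j then @inl 'I_2 bool ord0 else inr false
                   | inr true => inl (@Ordinal 2 1 isT)
                   | inr false => inr false end).
  split.
    by move=> i; case: (sigma i) => [j|[]] //; case: (x j).
  move=> y.
  have E : subst_input (fun i => match sigma i with
                   | inl j => if x j then @inl 'I_2 bool ord0 else inr false
                   | inr true => inl (@Ordinal 2 1 isT)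
                   | inr false => inr false end) y =
    if y (@Ordinal 2 1 isT) then subst_input sigma (fun j => y ord0 && x j)
    else subst_input sigma0 (fun j => y ord0 && x j).
    apply: functional_extensionality => i; rewrite /subst_input /sigma0.
    by case Hy: (y (@Ordinal 2 1 isT)); case: (sigma i) => [j|[]] //; try case: (x j); rewrite ?andbT ?andbF.
  rewrite E /IMPL; case Hy1: (y (@Ordinal 2 1 isT)).
    rewrite -Hs orbT /NAND; case: Hx1 => i Hi.
    apply/esym/negP => /forallP /(_ i); by rewrite Hi andbF.
  rewrite orbF; case Hy0: (y ord0) => /=.
    by have -> : (fun j => x j) = x by []; rewrite Hx2.
  by rewrite H00.
have d0 : 0 < d by apply: ltnW.
pose i0 : 'I_d := Ordinal d0.
exists (fun i => match sigma i with inr true => inl i0 | s => s end).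
split.
  by move=> i; case: (sigma i) => [j|[]].
move=> x; case Hxi: (x i0).
  have -> : subst_input (fun i => match sigma i with inr true => inl i0 | s => s end) x
          = subst_input sigma x.
    apply: functional_extensionality => i; rewrite /subst_input.
    by case: (sigma i) => [j|[]].
  by rewrite Hs.
have -> : subst_input (fun i => match sigma i with inr true => inl i0 | s => s end) x
        = subst_input sigma0 x.
  apply: functional_extensionality => i; rewrite /subst_input /sigma0.
  by case: (sigma i) => [j|[]].
have Hn : NAND d x = true.
  apply/negP => /forallP /(_ i0); by rewrite Hxi.
rewrite Hn; case E: (f (subst_input sigma0 x)) => //.
exfalso; apply: HnB; exists x; split => //; by exists i0.
Qed.
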